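(* The hybrid evaluator $IIH\mathbin{\Diamond}III$ and the uniform evaluator $IIS$ are one-step equivalent: for every term $M$ they produce the same evaluation sequence (in particular they are equal as partial functions). Moreover $IIS = rb\circ III$ where $rb$ is the readback evaluator given by $rb(x)=x$, $rb(\lambda x.B)=\lambda x.B$, and $rb(MN)=M'N'$ if $rb(M)=M'$ and $rb(III(N))=N'$.
   Context: Terms: $\Lambda ::= x\mid\lambda x.\Lambda\mid\Lambda\Lambda$; $[N/x]B$ is capture-avoiding substitution. An evaluator is a partial function $\Lambda\rightharpoonup\Lambda$ defined by inference rules, undefined (divergent) where no finite derivation exists; $\mathrm{id}$ is the identity. Eval-apply template: given evaluators $la,op_1,ar_1,op_2,ar_2$ (possibly $ea$ itself), $ea$ is defined by (var) $ea(x)=x$; (abs) $ea(\lambda x.B)=\lambda x.B'$ if $la(B)=B'$; (con) $ea(MN)=B'$ if $op_1(M)=\lambda x.B$, $ar_1(N)=N'$, $ea([N'/x]B)=B'$; (neu) $ea(MN)=M''N'$ if $op_1(M)=M'$, $M'$ not an abstraction, $op_2(M')=M''$, $ar_2(N)=N'$. Premises are evaluated left to right; the evaluation sequence is the sequence of reduction steps of the whole term given by the (con) contractions (including those inside subsidiary calls) in in-order traversal of the derivation. Uniform evaluator $XYZ\in\{I,S\}^3$: $op_1=ea$, $op_2=\mathrm{id}$, and $la$, $ar_1$, $ar_2$ equal to $ea$ itself when the letter is $S$ and $\mathrm{id}$ when it is $I$ ($III$ is call-by-name). Hybrid evaluator $X_1X_2X_3\mathbin{\Diamond}Y_1Y_2Y_3$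 ($X_i\in\{I,S,H\}$): with subsidiary $su$ the uniform evaluator $Y_1Y_2Y_3$, it is the instance $hy$ of the template with $op_1=su$, $op_2=hy$, and $la$, $ar_1$, $ar_2$ equal to $\mathrm{id}$, $su$, or $hy$ according as $X_1$, $X_2$, $X_3$ is $I$, $S$, or $H$. The evaluation sequence of a composition $rb\circ e$ is that of $e$ followed by that of $rb$ on the result. *)

(* Defs.v *)
(* Lambda terms in de Bruijn notation (terms up to alpha). *)
From Stdlib Require Import List.
Import ListNotations.

Inductive term : Type :=
| Var : nat -> term
| Lam : term -> term
| App : term -> term -> term.

Fixpoint lift (k : nat) (t : term) : term :=
  match t with
  | Var n => if Nat.ltb n k then Var n else Var (S n)
  | Lam b => Lam (lift (S k) b)
  | App m n => App (lift k m) (lift k n)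
  end.

(* capture-avoiding substitution [u/k]t, removing the binder k *)
Fixpoint subst (k : nat) (u : term) (t : term) : term :=
  match t with
  | Var n => match Nat.compare n k with
             | Lt => Var n
             | Eq => u
             | Gt => Var (pred n)
             end
  | Lam b => Lam (subst (S k) (lift 0 u) b)
  | App m n => App (subst k u m) (subst k u n)
  end.

(* [N/x]B where B is the body of lambda x.B *)
Definition beta (N B : term) : term := subst 0 N B.

Definition is_abs (t : term) : Prop :=
  match t with Lam _ => True | _ => False end.

(* A one-hole context: the whole term as a function of the subterm
   currently being evaluated. *)
Definition ctx := term -> term.

(* A reduction step of the whole term: (before, after). *)
Definition step := (term * term)%type.

(* An evaluator with evaluation sequences: ev C M M' s means that the
   evaluator maps M to M' (finite derivation), where M sits in the
   whole-term context C, and s is the sequence of whole-term reduction steps. *)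
Definition evaluator := ctx -> term -> term -> list step -> Prop.

Inductive kind : Type := KId | KSelf | KSub.

(* The eval-apply template.  [sub] is an externally given (subsidiary)
   evaluator; KSelf refers to the evaluator being defined; KId is id
   (no steps). Premises are evaluated left to right. *)
Inductive tmpl (sub : evaluator) (la op1 ar1 op2 ar2 : kind)
  : ctx -> term -> term -> list step -> Prop :=
| t_var : forall C n, tmpl sub la op1 ar1 op2 ar2 C (Var n) (Var n) nil
| t_abs : forall C B B' s,
    call sub la op1 ar1 op2 ar2 la (fun t => C (Lam t)) B B' s ->
    tmpl sub la op1 ar1 op2 ar2 C (Lam B) (Lam B') s
| t_con : forall C M N B N' R s1 s2 s3,
    call sub la op1 ar1 op2 ar2 op1 (fun t => C (App t N)) M (Lam B) s1 ->
    call sub la op1 ar1 op2 ar2 ar1 (fun t => C (App (Lam B) t)) N N' s2 ->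
    tmpl sub la op1 ar1 op2 ar2 C (beta N' B) R s3 ->
    tmpl sub la op1 ar1 op2 ar2 C (App M N) R
      (s1 ++ s2 ++ (C (App (Lam B) N'), C (beta N' B)) :: s3)
| t_neu : forall C M N M' M'' N' s1 s2 s3,
    call sub la op1 ar1 op2 ar2 op1 (fun t => C (App t N)) M M' s1 ->
    ~ is_abs M' ->
    call sub la op1 ar1 op2 ar2 op2 (fun t => C (App t N)) M' M'' s2 ->
    call sub la op1 ar1 op2 ar2 ar2 (fun t => C (App M'' t)) N N' s3 ->
    tmpl sub la op1 ar1 op2 ar2 C (App M N) (App M'' N') (s1 ++ s2 ++ s3)
with call (sub : evaluator) (la op1 ar1 op2 ar2 : kind)
  : kind -> ctx -> term -> term -> list step -> Prop :=
| c_id : forall C M, call sub la op1 ar1 op2 ar2 KId C M M nil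
| c_self : forall C M M' s,
    tmpl sub la op1 ar1 op2 ar2 C M M' s ->
    call sub la op1 ar1 op2 ar2 KSelf C M M' s
| c_sub : forall C M M' s,
    sub C M M' s -> call sub la op1 ar1 op2 ar2 KSub C M M' s.

Definition noEval : evaluator := fun _ _ _ _ => False.

Inductive uletter : Type := UI | US.
Definition ukind (l : uletter) : kind :=
  match l with UI => KId | US => KSelf end.

Definition uniform (X Y Z : uletter) : evaluator :=
  tmpl noEval (ukind X) KSelf (ukind Y) KId (ukind Z).

Inductive hletter : Type := HI | HS | HH.
Definition hkind (l : hletter) : kind :=
  match l with HI => KId | HS => KSub | HH => KSelf end.

Definition hybrid (X1 X2 X3 : hletter) (Y1 Y2 Y3 : uletter) : evaluator :=
  tmpl (uniform Y1 Y2 Y3) (hkind X1) KSub (hkind X2) KSelf (hkind X3).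

Inductive readback : evaluator :=
| rb_var : forall C n, readback C (Var n) (Var n) nil
| rb_abs : forall C B, readback C (Lam B) (Lam B) nil
| rb_app : forall C M N M' N1 N' s1 s2 s3,
    readback (fun t => C (App t N)) M M' s1 ->
    uniform UI UI UI (fun t => C (App M' t)) N N1 s2 ->
    readback (fun t => C (App M' t)) N1 N' s3 ->
    readback C (App M N) (App M' N') (s1 ++ s2 ++ s3).

Definition top : ctx := fun t => t.

(* Main.v *)
Require Import Defs.
From Stdlib Require Import List.
Import ListNotations.

Scheme tmpl_mind := Induction for tmpl Sort Prop
with call_mind := Induction for call Sort Prop.

Inductive cbn : ctx -> term -> term -> list step -> Prop :=
| cbn_var : forall C n, cbn C (Var n) (Var n) nil
| cbn_abs : forall C B, cbn C (Lam B) (Lam B) nil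
| cbn_con : forall C M N B R s1 s3,
    cbn (fun t => C (App t N)) M (Lam B) s1 ->
    cbn C (beta N B) R s3 ->
    cbn C (App M N) R (s1 ++ nil ++ (C (App (Lam B) N), C (beta N B)) :: s3)
| cbn_neu : forall C M N M' s1,
    cbn (fun t => C (App t N)) M M' s1 -> ~ is_abs M' ->
    cbn C (App M N) (App M' N) (s1 ++ nil ++ nil).

Inductive iis : ctx -> term -> term -> list step -> Prop :=
| iis_var : forall C n, iis C (Var n) (Var n) nil
| iis_abs : forall C B, iis C (Lam B) (Lam B) nil
| iis_con : forall C M N B R s1 s3,
    iis (fun t => C (App t N)) M (Lam B) s1 ->
    iis C (beta N B) R s3 ->
    iis C (App M N) R (s1 ++ nil ++ (C (App (Lam B) N), C (beta N B)) :: s3)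
| iis_neu : forall C M N M' N' s1 s3,
    iis (fun t => C (App t N)) M M' s1 -> ~ is_abs M' ->
    iis (fun t => C (App M' t)) N N' s3 ->
    iis C (App M N) (App M' N') (s1 ++ nil ++ s3).

Inductive hyb : ctx -> term -> term -> list step -> Prop :=
| hyb_var : forall C n, hyb C (Var n) (Var n) nil
| hyb_abs : forall C B, hyb C (Lam B) (Lam B) nil
| hyb_con : forall C M N B R s1 s3,
    cbn (fun t => C (App t N)) M (Lam B) s1 ->
    hyb C (beta N B) R s3 ->
    hyb C (App M N) R (s1 ++ nil ++ (C (App (Lam B) N), C (beta N B)) :: s3)
| hyb_neu : forall C M N M' M'' N' s1 s2 s3,
    cbn (fun t => C (App t N)) M M' s1 -> ~ is_abs M' ->
    hyb (fun t => C (App t N)) M' M'' s2 ->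
    hyb (fun t => C (App M'' t)) N N' s3 ->
    hyb C (App M N) (App M'' N') (s1 ++ s2 ++ s3).

Lemma cbn_of_u : forall C M R s, uniform UI UI UI C M R s -> cbn C M R s.
Proof.
  intros C M R s H.
  refine (tmpl_mind noEval KId KSelf KId KId KId (fun C M M' s _ => cbn C M M' s)
    (fun k C M M' s _ => match k with KSelf => cbn C M M' s
                         | KId => M' = M /\ s = nil | KSub => True end) _ _ _ _ _ _ _ _ _ _ _ H).
  - constructor.
  - intros C0 B B' s0 c H0. inversion c; subst. destruct H0; subst; constructor.
  - intros C0 M0 N B N' R0 s1 s2 s3 c H1 c0 H2 t H3.
    inversion c0; subst. destruct H2; subst. simpl in *. now constructor.
  - intros C0 M0 N M' M'' N' s1 s2 s3 c H1 n c0 H2 c1 H3.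
    inversion c0; subst. inversion c1; subst. destruct H2, H3; subst.
    simpl in *. now constructor.
  - intros; split; reflexivity.
  - intros; assumption.
  - intros; exact I.
Qed.

Lemma u_of_cbn : forall C M R s, cbn C M R s -> uniform UI UI UI C M R s.
Proof.
  induction 1; unfold uniform in *.
  - constructor.
  - apply t_abs. apply c_id.
  - eapply t_con; [apply c_self; eauto | apply c_id | eauto].
  - eapply t_neu; [apply c_self; eauto | eauto | apply c_id | apply c_id].
Qed.

Lemma iis_of_u : forall C M R s, uniform UI UI US C M R s -> iis C M R s.
Proof.
  intros C M R s H.
  refine (tmpl_mind noEval KId KSelf KId KId KSelf (fun C M M' s _ => iis C M M' s)
    (fun k C M M' s _ => match k with KSelf => iis C M M' s
                         | KId => M' = M /\ s = nil | KSub => True end) _ _ _ _ _ _ _ _ _ _ _ H).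
  - constructor.
  - intros C0 B B' s0 c H0. inversion c; subst. destruct H0; subst; constructor.
  - intros C0 M0 N B N' R0 s1 s2 s3 c H1 c0 H2 t H3.
    inversion c0; subst. destruct H2; subst. simpl in *. now constructor.
  - intros C0 M0 N M' M'' N' s1 s2 s3 c H1 n c0 H2 c1 H3.
    inversion c0; subst. destruct H2; subst.
    simpl in *. now constructor.
  - intros; split; reflexivity.
  - intros; assumption.
  - intros; exact I.
Qed.

Lemma u_of_iis : forall C M R s, iis C M R s -> uniform UI UI US C M R s.
Proof.
  induction 1; unfold uniform in *.
  - constructor.
  - apply t_abs. apply c_id.
  - eapply t_con; [apply c_self; eauto | apply c_id | eauto].
  - eapply t_neu; [apply c_self; eauto | eauto | apply c_id | apply c_self; eauto].
Qed.

Lemma hyb_of_h : forall C M R s, hybrid HI HI HH UI UI UI C M R s -> hyb C M R s.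
Proof.
  intros C M R s H.
  refine (tmpl_mind (uniform UI UI UI) KId KSub KId KSelf KSelf (fun C M M' s _ => hyb C M M' s)
    (fun k C M M' s _ => match k with KSelf => hyb C M M' s
                         | KId => M' = M /\ s = nil | KSub => cbn C M M' s end) _ _ _ _ _ _ _ _ _ _ _ H).
  - constructor.
  - intros C0 B B' s0 c H0. inversion c; subst. destruct H0; subst; constructor.
  - intros C0 M0 N B N' R0 s1 s2 s3 c H1 c0 H2 t H3.
    inversion c0; subst. destruct H2; subst. simpl in *. now constructor.
  - intros C0 M0 N M' M'' N' s1 s2 s3 c H1 n c0 H2 c1 H3.
    econstructor; eauto.
  - intros; split; reflexivity.
  - intros; assumption.
  - intros. now apply cbn_of_u.
Qed.

Lemma h_of_hyb : forall C M R s, hyb C M R s -> hybrid HI HI HH UI UI UI C M R s.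
Proof.
  induction 1; unfold hybrid in *.
  - constructor.
  - apply t_abs. apply c_id.
  - eapply t_con; [apply c_sub; apply u_of_cbn; eauto | apply c_id | eauto].
  - eapply t_neu; [apply c_sub; apply u_of_cbn; eauto | eauto | apply c_self; eauto | apply c_self; eauto].
Qed.

Lemma cbn_idem : forall C M M1 s, cbn C M M1 s -> forall C', cbn C' M1 M1 [].
Proof.
  induction 1; intros C'.
  - constructor.
  - constructor.
  - auto.
  - change (@nil step) with ((@nil step) ++ nil ++ nil). constructor; auto.
Qed.

Lemma cbn_det : forall C M R s, cbn C M R s -> forall R' s', cbn C M R' s' -> R = R' /\ s = s'.
Proof.
  induction 1; intros R' s' H'; inversion H'; subst; auto.
  - destruct (IHcbn1 _ _ ltac:(eassumption)) as [E1 E2]. inversion E1; subst.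
    destruct (IHcbn2 _ _ ltac:(eassumption)); subst; auto.
  - destruct (IHcbn1 _ _ ltac:(eassumption)) as [E1 E2]; subst.
    match goal with Hn : ~ is_abs _ |- _ => exfalso; apply Hn; exact I end.
  - destruct (IHcbn _ _ ltac:(eassumption)) as [E1 E2]; subst. exfalso; apply H0; exact I.
  - destruct (IHcbn _ _ ltac:(eassumption)) as [E1 E2]; subst; auto.
Qed.

Lemma cbn_lam_iis : forall C M R s, cbn C M R s -> forall B, R = Lam B -> iis C M R s.
Proof.
  induction 1; intros B0 E; try discriminate.
  - constructor.
  - subst. econstructor; eauto.
Qed.

Lemma rb_lam : forall C M R s, readback C M R s -> forall B, R = Lam B -> M = Lam B /\ s = [].
Proof. induction 1; intros B0 E; try discriminate; inversion E; subst; auto. Qed.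

Lemma rb_nonabs : forall C M R s, readback C M R s -> ~ is_abs M -> ~ is_abs R.
Proof. induction 1; simpl; auto. Qed.

Lemma iis_fact : forall C M R s, iis C M R s ->
  exists M1 s1 s2, cbn C M M1 s1 /\ readback C M1 R s2 /\ s = s1 ++ s2.
Proof.
  induction 1.
  - exists (Var n), [], []; repeat split; constructor.
  - exists (Lam B), [], []; repeat split; constructor.
  - destruct IHiis1 as (M1 & t1 & t2 & H1 & H2 & E1).
    destruct (rb_lam _ _ _ _ H2 B eq_refl); subst.
    destruct IHiis2 as (M2 & u1 & u2 & H3 & H4 & E2); subst.
    exists M2, (t1 ++ [] ++ (C (App (Lam B) N), C (beta N B)) :: u1), u2.
    repeat split; [constructor; auto | auto | ].
    rewrite !app_nil_r; simpl; rewrite <- app_assoc; reflexivity.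
  - destruct IHiis1 as (M1 & t1 & t2 & H2 & H3 & E1).
    destruct IHiis2 as (N1 & u1 & u2 & H4 & H5 & E2); subst.
    assert (NA : ~ is_abs M1).
    { intro A; destruct M1; try contradiction.
      inversion H3; subst; apply H0; exact I. }
    exists (App M1 N), (t1 ++ [] ++ []), (t2 ++ u1 ++ u2).
    repeat split.
    + constructor; auto.
    + eapply rb_app; [eassumption | apply u_of_cbn; eassumption | eassumption].
    + simpl. rewrite !app_nil_r, !app_assoc. reflexivity.
Qed.

Lemma hyb_fact : forall C M R s, hyb C M R s ->
  exists M1 s1 s2, cbn C M M1 s1 /\ readback C M1 R s2 /\ s = s1 ++ s2.
Proof.
  induction 1.
  - exists (Var n), [], []; repeat split; constructor.
  - exists (Lam B), [], []; repeat split; constructor.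
  - destruct IHhyb as (M2 & u1 & u2 & H3 & H4 & E2); subst.
    exists M2, (s1 ++ [] ++ (C (App (Lam B) N), C (beta N B)) :: u1), u2.
    repeat split; [constructor; auto | auto | ].
    simpl; rewrite <- app_assoc; reflexivity.
  - destruct IHhyb1 as (M1 & t1 & t2 & K2 & K3 & E1).
    destruct IHhyb2 as (N1 & u1 & u2 & K4 & K5 & E2); subst.
    destruct (cbn_det _ _ _ _ K2 _ _ (cbn_idem _ _ _ _ H _)); subst.
    exists (App M' N), (s1 ++ [] ++ []), (t2 ++ u1 ++ u2).
    repeat split.
    + constructor; auto.
    + eapply rb_app; [eassumption | apply u_of_cbn; eassumption | eassumption].
    + simpl. rewrite !app_nil_r. reflexivity.
Qed.

Lemma fact_both : forall C M1 R s2, readback C M1 R s2 -> forall M s1, cbn C M M1 s1 ->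
  iis C M R (s1 ++ s2) /\ hyb C M R (s1 ++ s2).
Proof.
  induction 1; intros M0 s0 Hc.
  - remember (Var n) as X eqn:EX. induction Hc; try discriminate.
    + rewrite app_nil_r. split; constructor.
    + destruct (IHHc2 EX). rewrite !app_nil_r in *.
      split; constructor; auto. eapply cbn_lam_iis; eauto.
  - remember (Lam B) as X eqn:EX. induction Hc; try discriminate.
    + rewrite app_nil_r. split; constructor.
    + destruct (IHHc2 EX). rewrite !app_nil_r in *.
      split; constructor; auto. eapply cbn_lam_iis; eauto.
  - remember (App M N) as X eqn:EX. revert EX.
    induction Hc; intros EX; try discriminate.
    + destruct (IHHc2 H H0 H1 IHreadback1 IHreadback2 EX) as [A1 A2].
      rewrite <- !app_assoc. simpl.
      split.
      * apply iis_con; auto. eapply cbn_lam_iis; eauto.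
      * apply hyb_con; auto.
    + injection EX; intros; subst.
      destruct (IHreadback1 _ _ Hc) as [A1 _].
      destruct (IHreadback1 _ _ (cbn_idem _ _ _ _ Hc (fun t => C (App t N)))) as [_ A2].
      destruct (IHreadback2 _ _ (cbn_of_u _ _ _ _ H0)) as [B1 B2].
      assert (NA : ~ is_abs M') by (eapply rb_nonabs; eauto).
      split.
      * replace ((s0 ++ [] ++ []) ++ s1 ++ s2 ++ s3) with ((s0 ++ s1) ++ [] ++ (s2 ++ s3))
          by (simpl; rewrite !app_nil_r, <- !app_assoc; reflexivity).
        apply iis_neu; auto.
      * replace ((s0 ++ [] ++ []) ++ s1 ++ s2 ++ s3) with (s0 ++ ([] ++ s1) ++ (s2 ++ s3))
          by (simpl; rewrite !app_nil_r; reflexivity).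
        eapply hyb_neu; eauto.
Qed.

Theorem mainTheorem7 :
  (forall (M R : term) (s : list step),
      hybrid HI HI HH UI UI UI top M R s <-> uniform UI UI US top M R s)
  /\
  (forall (M R : term) (s : list step),
      uniform UI UI US top M R s <->
      exists (M' : term) (s1 s2 : list step),
        uniform UI UI UI top M M' s1 /\ readback top M' R s2 /\ s = s1 ++ s2).
Proof.
  split; intros M R s; split; intro H.
  - apply hyb_of_h in H. destruct (hyb_fact _ _ _ _ H) as (M1 & s1 & s2 & A & B & E); subst.
    apply u_of_iis. exact (proj1 (fact_both _ _ _ _ B _ _ A)).
  - apply iis_of_u in H. destruct (iis_fact _ _ _ _ H) as (M1 & s1 & s2 & A & B & E); subst.
    apply h_of_hyb. exact (proj2 (fact_both _ _ _ _ B _ _ A)).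
  - apply iis_of_u in H. destruct (iis_fact _ _ _ _ H) as (M1 & s1 & s2 & A & B & E); subst.
    exists M1, s1, s2. repeat split; auto. now apply u_of_cbn.
  - destruct H as (M1 & s1 & s2 & A & B & E); subst.
    apply u_of_iis. exact (proj1 (fact_both _ _ _ _ B _ _ (cbn_of_u _ _ _ _ A))).
Qed.
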